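(* Let $0<q<1$, let $a,b,c,d\in\mathbb{C}$ with $aq\notin\{q^{-m}:m\in\mathbb{N}\}$, let $|t|<1$ with $tc,td\notin\{q^{-m}:m\in\mathbb{N}\}$, let $n\in\mathbb{N}$ and $x=\cos\theta$, $\theta\in[0,\pi]$. Then \[ \sum_{k=0}^\infty\frac{t^k}{(q;q)_k}\,p_n(q^k;a,b;q)\,Q_k(x;c,d|q)=\frac{(tc,td;q)_\infty}{(te^{i\theta},te^{-i\theta};q)_\infty}\,{}_4\phi_3\!\left(\begin{matrix}q^{-n},\,abq^{n+1},\,te^{i\theta},\,te^{-i\theta}\\ aq,\,tc,\,td\end{matrix};q,q\right). \]
   Context: $(x;q)_k=\prod_{j=0}^{k-1}(1-xq^j)$, $(x;q)_\infty=\prod_{j\ge0}(1-xq^j)$, $(x_1,\dots,x_r;q)_k=\prod_i(x_i;q)_k$. ${}_{r}\phi_{s}\!\left(\begin{smallmatrix}a_1,\dots,a_r\\ b_1,\dots,b_s\end{smallmatrix};q,z\right)=\sum_{j\ge0}\frac{(a_1,\dots,a_r;q)_j}{(q,b_1,\dots,b_s;q)_j}\bigl((-1)^jq^{j(j-1)/2}\bigr)^{1+s-r}z^j$. Little $q$-Jacobi polynomials: $p_n(x;a,b;q)={}_2\phi_1\!\left(\begin{smallmatrix}q^{-n},abq^{n+1}\\ aq\end{smallmatrix};q,qx\right)$. Al-Salam–Chihara polynomials: $Q_n(x;c,d|q)=\frac{(cd;q)_n}{c^n}\,{}_3\phi_2\!\left(\begin{smallmatrix}q^{-n},ce^{i\theta},ce^{-i\theta}\\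 cd,\,0\end{smallmatrix};q,q\right)$, $x=\cos\theta$. *)

(* Defs.v *)
From Stdlib Require Import Reals ClassicalEpsilon List.
Open Scope R_scope.

Definition Cpx : Type := (R * R)%type.
Definition RtoC (r : R) : Cpx := (r, 0).
Definition C0 : Cpx := (0, 0).
Definition C1 : Cpx := (1, 0).
Definition Cadd (z w : Cpx) : Cpx := (fst z + fst w, snd z + snd w).
Definition Copp (z : Cpx) : Cpx := (- fst z, - snd z).
Definition Csub (z w : Cpx) : Cpx := Cadd z (Copp w).
Definition Cmul (z w : Cpx) : Cpx :=
  (fst z * fst w - snd z * snd w, fst z * snd w + snd z * fst w).
Definition Cinv (z : Cpx) : Cpx :=
  (fst z / (fst z ^ 2 + snd z ^ 2), - snd z / (fst z ^ 2 + snd z ^ 2)).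
Definition Cdiv (z w : Cpx) : Cpx := Cmul z (Cinv w).
Definition Cnorm (z : Cpx) : R := sqrt (fst z ^ 2 + snd z ^ 2).
Fixpoint Cpow (z : Cpx) (n : nat) : Cpx :=
  match n with O => C1 | S m => Cmul (Cpow z m) z end.
Definition Cexpi (th : R) : Cpx := (cos th, sin th).

Definition Cconv (u : nat -> Cpx) (l : Cpx) : Prop :=
  forall eps : R, eps > 0 -> exists N : nat, forall m : nat,
    (m >= N)%nat -> Cnorm (Csub (u m) l) < eps.
Fixpoint Csum (f : nat -> Cpx) (n : nat) : Cpx :=
  match n with O => C0 | S m => Cadd (Csum f m) (f m) end.
(* the limit of a sequence (meaningful when it converges) *)
Definition Clim (u : nat -> Cpx) : Cpx := epsilon (inhabits C0) (fun l => Cconv u l).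
Definition Cseries (f : nat -> Cpx) : Cpx := Clim (Csum f).

Fixpoint qpoch (x : Cpx) (q : R) (k : nat) : Cpx :=
  match k with
  | O => C1
  | S j => Cmul (qpoch x q j) (Csub C1 (Cmul x (RtoC (q ^ j))))
  end.
Definition qpoch_inf (x : Cpx) (q : R) : Cpx := Clim (qpoch x q).
Definition qpoch_list (xs : list Cpx) (q : R) (k : nat) : Cpx :=
  fold_right (fun x acc => Cmul (qpoch x q k) acc) C1 xs.

Definition rphis (al bl : list Cpx) (q : R) (z : Cpx) : Cpx :=
  Cseries (fun j =>
    Cmul (Cdiv (qpoch_list al q j) (qpoch_list (RtoC q :: bl) q j))
      (Cmul (RtoC (powerRZ ((-1) ^ j * q ^ (Nat.div (j * (j - 1)) 2))
                   (1 + Z.of_nat (length bl) - Z.of_nat (length al))%Z))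
            (Cpow z j))).

(* little q-Jacobi: p_n(x;a,b;q) = 2phi1(q^{-n}, a b q^{n+1}; a q; q, q x) *)
Definition little_qjacobi (n : nat) (x a b : Cpx) (q : R) : Cpx :=
  rphis (RtoC (/ q ^ n) :: Cmul (Cmul a b) (RtoC (q ^ (S n))) :: nil)
        (Cmul a (RtoC q) :: nil) q (Cmul (RtoC q) x).

(* Al-Salam--Chihara: Q_n(cos th; c, d | q)
   = (cd;q)_n / c^n * 3phi2(q^{-n}, c e^{i th}, c e^{-i th}; cd, 0; q, q),
   written as the (terminating, j <= n) sum with (cd;q)_n/(cd;q)_j
   simplified to (cd q^j;q)_{n-j}. *)
Definition al_salam_chihara (n : nat) (th : R) (c d : Cpx) (q : R) : Cpx :=
  Cdiv
    (Csum (fun j =>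
       Cmul (Cdiv (qpoch_list (RtoC (/ q ^ n) :: Cmul c (Cexpi th)
                               :: Cmul c (Cexpi (- th)) :: nil) q j)
                  (qpoch (RtoC q) q j))
            (Cmul (qpoch (Cmul (Cmul c d) (RtoC (q ^ j))) q (n - j))
                  (RtoC (q ^ j)))) (S n))
    (Cpow c n).

(* Main.v *)
Require Import Defs.
From Stdlib Require Import Reals List Lra Lia ClassicalEpsilon.
From Coquelicot Require Complex.
Open Scope R_scope.
Module Aux.
Import Complex.

Ltac toC := change Defs.Cmul with Cmult in *; change Defs.Cadd with Cplus in *;
  change Defs.Csub with Cminus in *; change Defs.Copp with Copp in *;
  change Defs.Cdiv with Cdiv in *; change Defs.Cinv with Cinv in *;
  change Defs.Cnorm with Cmod in *; change Defs.C0 with (RtoC 0) in *;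
  change Defs.C1 with (RtoC 1) in *; change Defs.Cpx with C in *; change Defs.RtoC with RtoC in *;
  try match goal with |- @eq _ ?a ?b => change (@eq C a b) end.

Lemma Ceq_help (a b : C) : (0 + a = 0 + b)%C -> a = b.
Proof. rewrite !Cplus_0_l. auto. Qed.
Ltac cring := toC; unfold Cdiv; apply Ceq_help; ring.
Ltac cfield := toC; apply Ceq_help; field.

Lemma Cpow_eq (z : C) n : Defs.Cpow z n = (z ^ n)%C.
Proof. induction n; simpl; toC. reflexivity. rewrite IHn. ring. Qed.

Lemma abs_fst (z : C) : Rabs (fst z) <= Cmod z.
Proof. apply re_le_Cmod. Qed.
Lemma abs_snd (z : C) : Rabs (snd z) <= Cmod z.
Proof. pose proof (Rmax_Cmod z). pose proof (Rmax_r (Rabs (fst z)) (Rabs (snd z))). lra. Qed.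

Lemma Cmod_le_sum (z : C) : Cmod z <= Rabs (fst z) + Rabs (snd z).
Proof.
  unfold Cmod. pose proof (Rabs_pos (fst z)). pose proof (Rabs_pos (snd z)).
  rewrite <- (sqrt_pow2 (Rabs (fst z) + Rabs (snd z))) by lra.
  apply sqrt_le_1_alt.
  assert (fst z ^ 2 = Rabs (fst z) ^ 2) by (rewrite pow2_abs; reflexivity).
  assert (snd z ^ 2 = Rabs (snd z) ^ 2) by (rewrite pow2_abs; reflexivity).
  nra.
Qed.

Lemma Cconv_iff (u : nat -> C) (l : C) :
  Cconv u l <-> Un_cv (fun n => fst (u n)) (fst l) /\ Un_cv (fun n => snd (u n)) (snd l).
Proof.
  split.
  - intros H. split; intros eps Heps; destruct (H eps Heps) as [N HN]; exists N; intros m Hm;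
    specialize (HN m Hm); unfold R_dist; toC.
    + pose proof (abs_fst (u m - l)%C). simpl in H0. unfold Rminus. lra.
    + pose proof (abs_snd (u m - l)%C). simpl in H0. unfold Rminus. lra.
  - intros [H1 H2] eps Heps.
    destruct (H1 (eps/2)) as [N1 HN1]; [lra|]. destruct (H2 (eps/2)) as [N2 HN2]; [lra|].
    exists (max N1 N2). intros m Hm. toC.
    specialize (HN1 m ltac:(lia)). specialize (HN2 m ltac:(lia)). unfold R_dist in *.
    pose proof (Cmod_le_sum (u m - l)%C). simpl in H. unfold Rminus in *. lra.
Qed.

Lemma Cconv_unique u a b : Cconv u a -> Cconv u b -> a = b.
Proof.
  intros Ha Hb. apply Cconv_iff in Ha, Hb. destruct Ha, Hb.
  destruct a, b; simpl in *. f_equal; eapply UL_sequence; eauto.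
Qed.

Lemma Clim_eq u l : Cconv u l -> Clim u = l.
Proof.
  intros H. unfold Clim. apply (Cconv_unique u); auto.
  apply epsilon_spec. exists l; auto.
Qed.

Lemma Cconv_plus u v a b : Cconv u a -> Cconv v b -> Cconv (fun n => u n + v n)%C (a + b)%C.
Proof.
  rewrite !Cconv_iff. intros [H1 H2] [H3 H4]. split; simpl.
  apply (CV_plus _ _ _ _ H1 H3). apply (CV_plus _ _ _ _ H2 H4).
Qed.

Lemma Cconv_minus u v a b : Cconv u a -> Cconv v b -> Cconv (fun n => u n - v n)%C (a - b)%C.
Proof.
  rewrite !Cconv_iff. intros [H1 H2] [H3 H4]. split; simpl.
  apply (CV_plus _ _ _ _ H1 (CV_opp _ _ H3)). apply (CV_plus _ _ _ _ H2 (CV_opp _ _ H4)).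
Qed.

Lemma Cconv_mult u v a b : Cconv u a -> Cconv v b -> Cconv (fun n => u n * v n)%C (a * b)%C.
Proof.
  rewrite !Cconv_iff. intros [H1 H2] [H3 H4]. split; simpl.
  apply CV_minus; apply CV_mult; auto.
  apply CV_plus; apply CV_mult; auto.
Qed.

Lemma Cconv_const (a : C) : Cconv (fun _ => a) a.
Proof.
  intros eps Heps. exists O. intros. toC. replace (a - a)%C with (RtoC 0) by ring.
  rewrite Cmod_0. auto.
Qed.

Lemma Cconv_ext u v l : (forall n, u n = v n) -> Cconv u l -> Cconv v l.
Proof. intros E H eps He. destruct (H eps He) as [N HN]. exists N. intros. rewrite <- E. auto. Qed.

Lemma Cconv_ext_ev u v l N0 : (forall n, (n >= N0)%nat -> u n = v n) -> Cconv u l -> Cconv v l.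
Proof. intros E H eps He. destruct (H eps He) as [N HN]. exists (max N N0). intros. rewrite <- E by lia. apply HN; lia. Qed.

Lemma Cconv_shift u l k : Cconv u l -> Cconv (fun n => u (n + k)%nat) l.
Proof. intros H eps He. destruct (H eps He) as [N HN]. exists N. intros. apply HN; lia. Qed.

Lemma Cconv_shift_inv u l k : Cconv (fun n => u (n + k)%nat) l -> Cconv u l.
Proof. intros H eps He. destruct (H eps He) as [N HN]. exists (N + k)%nat. intros.
  replace m with ((m - k) + k)%nat by lia. apply HN; lia. Qed.

Lemma Cconv_cauchy (u : nat -> C) (f : nat -> R) :
  (forall n m, (n <= m)%nat -> Cmod (u m - u n) <= f n) ->
  (forall eps, 0 < eps -> exists N, forall n, (n >= N)%nat -> f n < eps) ->
  exists l, Cconv u l /\ forall n, Cmod (l - u n) <= f n.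
Proof.
  intros Hb Hf.
  assert (Hc : forall (p : C -> R), (forall z, Rabs (p (z)) <= Cmod z) ->
     (forall z w, p (z - w)%C = p z - p w) -> Cauchy_crit (fun n => p (u n))).
  { intros p Hp Hl eps He. destruct (Hf eps He) as [N HN]. exists N. intros n m Hn Hm.
    unfold R_dist. destruct (Nat.le_ge_cases n m).
    - rewrite Rabs_minus_sym, <- Hl. eapply Rle_lt_trans. apply Hp. eapply Rle_lt_trans. apply Hb; auto. auto.
    - rewrite <- Hl. eapply Rle_lt_trans. apply Hp. eapply Rle_lt_trans. apply Hb; auto. auto. }
  destruct (R_complete _ (Hc fst abs_fst (fun z w => eq_refl))) as [l1 H1].
  destruct (R_complete _ (Hc snd abs_snd (fun z w => eq_refl))) as [l2 H2].
  assert (Hl : Cconv u (l1, l2)) by (apply Cconv_iff; auto).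
  exists (l1, l2). split; auto. intros n.
  apply le_epsilon. intros eps He. destruct (Hl eps He) as [N HN].
  specialize (HN (max N n) ltac:(lia)). specialize (Hb n (max N n) ltac:(lia)). toC.
  replace ((l1, l2) - u n)%C with ((u (max N n) - u n) - (u (max N n) - (l1,l2)))%C by ring.
  eapply Rle_trans. unfold Cminus at 1. apply Cmod_triangle. rewrite Cmod_opp. lra.
Qed.

Lemma Csum_S f n : Csum f (S n) = (Csum f n + f n)%C.
Proof. reflexivity. Qed.

Lemma Csum_first f n : Csum f (S n) = (f O + Csum (fun i => f (S i)) n)%C.
Proof. induction n. simpl; toC; ring. rewrite Csum_S, IHn. simpl; toC; ring. Qed.

Lemma Csum_ext f g n : (forall i, (i < n)%nat -> f i = g i) -> Csum f n = Csum g n.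
Proof. induction n; intros H; simpl; auto. rewrite IHn, H; auto. Qed.

Lemma Csum_plus f g n : Csum (fun i => f i + g i)%C n = (Csum f n + Csum g n)%C.
Proof. induction n; simpl; toC. ring. rewrite IHn. ring. Qed.

Lemma Csum_minus f g n : Csum (fun i => f i - g i)%C n = (Csum f n - Csum g n)%C.
Proof. induction n; simpl; toC. ring. rewrite IHn. ring. Qed.

Lemma Csum_scal (a : C) f n : Csum (fun i => a * f i)%C n = (a * Csum f n)%C.
Proof. induction n; simpl; toC. ring. rewrite IHn. ring. Qed.

Lemma Csum_zero f n : (forall i, (i < n)%nat -> f i = RtoC 0) -> Csum f n = RtoC 0.
Proof. induction n; intros H; simpl; toC; auto. rewrite IHn, H; auto. ring. Qed.

Lemma Csum_tail f n m : (n <= m)%nat -> (forall i, (i >= n)%nat -> f i = RtoC 0) -> Csum f m = Csum f n.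
Proof. intros Hnm H. induction Hnm; auto. rewrite Csum_S, IHHnm, H by lia. toC. ring. Qed.

Lemma Cconv_finite f n : (forall i, (i >= n)%nat -> f i = RtoC 0) -> Cconv (Csum f) (Csum f n).
Proof.
  intros H. apply (Cconv_ext_ev (fun _ => Csum f n) _ _ n).
  intros. symmetry. apply Csum_tail; auto. apply Cconv_const.
Qed.

Lemma Cseries_finite f n : (forall i, (i >= n)%nat -> f i = RtoC 0) -> Cseries f = Csum f n.
Proof. intros H. apply Clim_eq. apply Cconv_finite; auto. Qed.

Lemma Csum_geom (a : nat -> C) (M rho : R) :
  0 <= M -> 0 <= rho < 1 -> (forall k, Cmod (a k) <= M * rho ^ k) ->
  exists l, Cconv (Csum a) l /\ forall n, Cmod (l - Csum a n) <= M * rho ^ n / (1 - rho).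
Proof.
  intros HM Hr Ha. apply Cconv_cauchy.
  - intros n m Hnm. replace m with (n + (m - n))%nat by lia. generalize (m - n)%nat. intros d.
    assert (Cmod (Csum a (n + d) - Csum a n) <= M * (rho ^ n - rho ^ (n + d)) / (1 - rho)).
    { induction d.
      - rewrite Nat.add_0_r. toC. replace (Csum a n - Csum a n)%C with (RtoC 0) by ring.
        rewrite Cmod_0. replace (rho ^ n - rho ^ n) with 0 by ring. unfold Rdiv. rewrite Rmult_0_r, Rmult_0_l. lra.
      - rewrite Nat.add_succ_r, Csum_S. toC.
        replace (Csum a (n + d) + a (n + d)%nat - Csum a n)%C with ((Csum a (n + d) - Csum a n) + a (n+d)%nat)%C by ring.
        eapply Rle_trans. apply Cmod_triangle. specialize (Ha (n + d)%nat).
        apply Rle_trans with (M * (rho ^ n - rho ^ (n + d)) / (1 - rho) + M * rho ^ (n + d)). lra.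
        right. simpl. field. lra. }
    eapply Rle_trans. apply H. unfold Rdiv. apply Rmult_le_compat_r. apply Rlt_le, Rinv_0_lt_compat; lra.
    apply Rmult_le_compat_l; auto. pose proof (pow_le rho (n + d) ltac:(lra)). lra.
  - intros eps He. destruct (pow_lt_1_zero rho ltac:(rewrite Rabs_pos_eq; lra) (eps * (1 - rho) / (M + 1))) as [N HN].
    apply Rdiv_lt_0_compat; nra. exists N. intros n Hn. specialize (HN n Hn).
    rewrite Rabs_pos_eq in HN by (apply pow_le; lra).
    apply Rmult_lt_reg_r with (1 - rho). lra. unfold Rdiv. rewrite Rmult_assoc, Rinv_l, Rmult_1_r by lra.
    apply Rlt_le_trans with ((M+1) * (eps * (1 - rho) / (M + 1))).
    pose proof (pow_le rho n ltac:(lra)). nra. right. field. lra.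
Qed.

Fixpoint Rsum (f : nat -> R) (n : nat) : R :=
  match n with O => 0 | S m => Rsum f m + f m end.

Lemma Cmod_Csum f n : Cmod (Csum f n) <= Rsum (fun i => Cmod (f i)) n.
Proof. induction n; simpl; toC. rewrite Cmod_0. lra. eapply Rle_trans. apply Cmod_triangle. lra. Qed.

Lemma pow_le1 x n : 0 <= x <= 1 -> x ^ n <= 1.
Proof. intros H. induction n; simpl. lra. pose proof (pow_le x n ltac:(lra)). nra. Qed.

Lemma exp_ge1 y : 0 <= y -> 1 + y <= exp y.
Proof. intros [H|H]. - left. apply exp_ineq1; lra. - rewrite <- H. rewrite exp_0. lra. Qed.

Lemma one_minus_ge y r : 0 <= y <= r -> r < 1 -> exp (- (y / (1 - r))) <= 1 - y.
Proof.
  intros Hy Hr. rewrite exp_Ropp.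
  assert (1 / (1 - y) <= exp (y / (1 - r))).
  { eapply Rle_trans with (1 + y / (1 - r)). 
    - apply Rle_trans with (1 + y / (1 - y)). right. field. lra.
      apply Rplus_le_compat_l. unfold Rdiv. apply Rmult_le_compat_l. lra.
      apply Rinv_le_contravar; lra.
    - apply exp_ge1. unfold Rdiv. apply Rmult_le_pos. lra. left. apply Rinv_0_lt_compat. lra. }
  pose proof (exp_pos (y / (1 - r))).
  apply Rmult_le_reg_l with (exp (y / (1 - r))). auto. rewrite Rinv_r by lra.
  apply Rmult_le_reg_l with (/ (1 - y)). apply Rinv_0_lt_compat. lra.
  replace (/ (1 - y) * (exp (y / (1 - r)) * (1 - y))) with (exp (y / (1 - r))) by (field; lra).
  rewrite Rmult_1_r. lra.
Qed.

Lemma RtoC_powS (q : R) j : RtoC (q ^ S j) = (RtoC q * RtoC (q ^ j))%C.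
Proof. simpl. rewrite RtoC_mult. reflexivity. Qed.

Lemma qpoch_S x q j : qpoch x q (S j) = (qpoch x q j * (1 - x * RtoC (q ^ j)))%C.
Proof. reflexivity. Qed.

Lemma qpoch_shift x q j : qpoch x q (S j) = ((1 - x) * qpoch (x * RtoC q) q j)%C.
Proof.
  induction j. simpl; toC. ring.
  rewrite qpoch_S, IHj, qpoch_S. toC. rewrite RtoC_powS. ring.
Qed.

Lemma qpoch_add x q j m : qpoch x q (j + m) = (qpoch x q j * qpoch (x * RtoC (q ^ j)) q m)%C.
Proof.
  induction m. rewrite Nat.add_0_r. simpl. cring.
  rewrite Nat.add_succ_r, !qpoch_S, IHm, pow_add, RtoC_mult. toC. ring.
Qed.

Lemma geom_sum_S q n : q <> 1 -> (1 - q ^ n) / (1 - q) + q ^ n = (1 - q ^ S n) / (1 - q).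
Proof. intros. simpl. field. lra. Qed.

Lemma qpoch_upper x q n : 0 < q < 1 -> Cmod (qpoch x q n) <= exp (Cmod x * ((1 - q ^ n) / (1 - q))).
Proof.
  intros Hq. induction n.
  - simpl. toC. rewrite Cmod_1. replace ((1 - 1) / (1 - q)) with 0 by (field; lra). rewrite Rmult_0_r, exp_0. lra.
  - rewrite qpoch_S, Cmod_mult. toC. rewrite <- geom_sum_S by lra. rewrite Rmult_plus_distr_l, exp_plus.
    apply Rmult_le_compat; auto using Cmod_ge_0.
    eapply Rle_trans. unfold Cminus. apply Cmod_triangle. rewrite Cmod_1, Cmod_opp, Cmod_mult, Cmod_R.
    rewrite Rabs_pos_eq by (apply pow_le; lra). apply exp_ge1.
    pose proof (Cmod_ge_0 x). pose proof (pow_le q n ltac:(lra)). nra.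
Qed.

Lemma qpoch_lower x q n : 0 < q < 1 -> Cmod x < 1 ->
  exp (- (Cmod x * ((1 - q ^ n) / (1 - q)) / (1 - Cmod x))) <= Cmod (qpoch x q n).
Proof.
  intros Hq Hx. pose proof (Cmod_ge_0 x). induction n.
  - simpl. toC. rewrite Cmod_1. replace ((1 - 1) / (1 - q)) with 0 by (field; lra).
    replace (- (Cmod x * 0 / (1 - Cmod x))) with 0 by (field; lra). rewrite exp_0. lra.
  - rewrite qpoch_S, Cmod_mult. toC. rewrite <- geom_sum_S by lra.
    replace (- (Cmod x * ((1 - q ^ n) / (1 - q) + q ^ n) / (1 - Cmod x)))
      with ((- (Cmod x * ((1 - q ^ n) / (1 - q)) / (1 - Cmod x))) + (- (Cmod x * q ^ n / (1 - Cmod x)))) by (field; lra).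
    rewrite exp_plus. apply Rmult_le_compat; try (left; apply exp_pos); auto.
    pose proof (pow_le q n ltac:(lra)). assert (q ^ n <= 1) by (apply pow_le1; lra).
    eapply Rle_trans. apply (one_minus_ge (Cmod x * q ^ n) (Cmod x)). split; nra. lra.
    pose proof (Cmod_triangle (1 - x * RtoC (q ^ n)) (x * RtoC (q ^ n))) as HT.
    replace (1 - x * RtoC (q ^ n) + x * RtoC (q ^ n))%C with (RtoC 1) in HT by ring.
    rewrite Cmod_1, Cmod_mult, Cmod_R, Rabs_pos_eq in HT by auto. lra.
Qed.


Lemma exp_mono a b : a <= b -> exp a <= exp b.
Proof. intros [H|H]. left; apply exp_increasing; auto. subst; lra. Qed.

Lemma Cconv_Clim u l : Cconv u l -> Cconv u (Clim u).
Proof. intros H. rewrite (Clim_eq u l H). auto. Qed.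

Lemma qpoch_conv x q : 0 < q < 1 -> Cconv (qpoch x q) (qpoch_inf x q).
Proof.
  intros Hq. unfold qpoch_inf.
  set (a := fun k => (qpoch x q (S k) - qpoch x q k)%C).
  assert (Hs : forall n, qpoch x q n = (1 + Csum a n)%C).
  { induction n. simpl. toC. ring. rewrite Csum_S. transitivity ((1 + Csum a n) + a n)%C.
    change (a n) with (qpoch x q (S n) - qpoch x q n)%C. rewrite <- IHn. cring. toC; ring. }
  destruct (Csum_geom a (exp (Cmod x / (1 - q)) * Cmod x) q) as [l [Hl _]].
  - pose proof (exp_pos (Cmod x / (1 - q))). pose proof (Cmod_ge_0 x). nra.
  - lra.
  - intros k. unfold a. rewrite qpoch_S. toC.
    replace (qpoch x q k * (1 - x * RtoC (q ^ k)) - qpoch x q k)%C with (- (qpoch x q k * x * RtoC (q ^ k)))%C by ring.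
    rewrite Cmod_opp, !Cmod_mult, Cmod_R, Rabs_pos_eq by (apply pow_le; lra).
    pose proof (qpoch_upper x q k Hq). pose proof (Cmod_ge_0 x). pose proof (pow_le q k ltac:(lra)).
    assert (exp (Cmod x * ((1 - q ^ k) / (1 - q))) <= exp (Cmod x / (1 - q))).
    { apply exp_mono.
      unfold Rdiv. rewrite <- Rmult_assoc. apply Rmult_le_compat_r. left; apply Rinv_0_lt_compat; lra. nra. }
    pose proof (Cmod_ge_0 (qpoch x q k)).
    rewrite !Rmult_assoc. apply Rmult_le_compat_r. nra. lra.
  - apply (Cconv_Clim _ (1 + l)%C). apply (Cconv_ext (fun n => (1 + Csum a n)%C)). intros; auto.
    apply Cconv_plus; auto. apply Cconv_const.
Qed.

Lemma Cconv_nonzero u L delta : 0 < delta -> (forall n, delta <= Cmod (u n)) -> Cconv u L -> L <> RtoC 0.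
Proof.
  intros Hd Hu H E. subst. destruct (H delta Hd) as [N HN]. specialize (HN N (le_n _)). toC.
  replace (u N - 0)%C with (u N) in HN by ring. specialize (Hu N). lra.
Qed.

Lemma qpoch_inf_nonzero x q : 0 < q < 1 -> Cmod x < 1 -> qpoch_inf x q <> RtoC 0.
Proof.
  intros Hq Hx. apply (Cconv_nonzero (qpoch x q) _ (exp (- (Cmod x * (1 / (1 - q)) / (1 - Cmod x))))).
  apply exp_pos. 2: apply qpoch_conv; auto.
  intros n. eapply Rle_trans. 2: apply qpoch_lower; auto.
  pose proof (Cmod_ge_0 x). pose proof (pow_le q n ltac:(lra)).
  apply exp_mono. apply Ropp_le_contravar. unfold Rdiv.
  apply Rmult_le_compat_r. left; apply Rinv_0_lt_compat; lra.
  apply Rmult_le_compat_l. lra. apply Rmult_le_compat_r. left; apply Rinv_0_lt_compat; lra. lra.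
Qed.

Lemma qpoch_inf_split x q j : 0 < q < 1 ->
  qpoch_inf x q = (qpoch x q j * qpoch_inf (x * RtoC (q ^ j)) q)%C.
Proof.
  intros Hq. apply (Cconv_unique (fun m => qpoch x q (m + j))).
  apply Cconv_shift, qpoch_conv; auto.
  apply (Cconv_ext (fun m => qpoch x q j * qpoch (x * RtoC (q ^ j)) q m)%C).
  intros m. rewrite Nat.add_comm, qpoch_add. reflexivity.
  apply Cconv_mult. apply Cconv_const. apply qpoch_conv; auto.
Qed.
End Aux.

Module Aux2.
Import Complex Aux.

Lemma RtoC_invpow q n : q <> 0 -> RtoC (/ q ^ n) = (/ (RtoC q ^ n))%C.
Proof. intros. rewrite RtoC_inv, RtoC_pow. auto. apply pow_nonzero; auto. Qed.

Lemma qpoch_zero_gt q k j : 0 < q -> (j > k)%nat -> qpoch (RtoC (/ q ^ k)) q j = RtoC 0.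
Proof.
  intros Hq Hj. replace j with (S k + (j - S k))%nat by lia. rewrite qpoch_add, qpoch_S.
  toC. replace (1 - RtoC (/ q ^ k) * RtoC (q ^ k))%C with (RtoC 0). cring.
  rewrite <- RtoC_mult, Rinv_l. cring. apply pow_nonzero; lra.
Qed.

Definition Dk (q : R) (c d : C) (k j : nat) : C :=
  (qpoch (RtoC (/ q ^ k)) q j / qpoch (RtoC q) q j *
   (qpoch (c * d * RtoC (q ^ j)) q (k - j) * RtoC (q ^ j)) / c ^ k)%C.

Definition phi (q th : R) (c : C) (j : nat) : C :=
  (qpoch (c * Cexpi th) q j * qpoch (c * Cexpi (- th)) q j)%C.

Lemma Dk_zero q c d k j : 0 < q -> (j > k)%nat -> Dk q c d k j = RtoC 0.
Proof. intros. unfold Dk. rewrite qpoch_zero_gt; auto. toC. unfold Cdiv. apply Ceq_help. ring. Qed.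

Lemma Q_expand q c d th k M : 0 < q -> (M >= S k)%nat ->
  al_salam_chihara k th c d q = Csum (fun j => Dk q c d k j * phi q th c j)%C M.
Proof.
  intros Hq HM. rewrite (Csum_tail _ (S k) M); auto.
  2: { intros. rewrite Dk_zero; auto. cring. }
  unfold al_salam_chihara. rewrite Cpow_eq. toC. unfold Cdiv at 1.
  rewrite Cmult_comm, <- Csum_scal. apply Csum_ext. intros i Hi.
  unfold Dk, phi, qpoch_list. simpl fold_right. toC. unfold Cdiv. ring.
Qed.

Lemma Cexpi_mul th : (Cexpi th * Cexpi (- th))%C = RtoC 1.
Proof.
  unfold Cexpi. rewrite cos_neg, sin_neg. unfold Cmult, RtoC; simpl. f_equal.
  rewrite <- (sin2_cos2 th). unfold Rsqr. ring. ring.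
Qed.

Definition ee th : C := (Cexpi th + Cexpi (- th))%C.

Lemma phi_S q th c j : phi q th c (S j) =
  (phi q th c j * (1 - c * ee th * RtoC (q ^ j) + c * c * RtoC (q ^ j) * RtoC (q ^ j)))%C.
Proof.
  unfold phi, ee. rewrite !qpoch_S. pose proof (Cexpi_mul th). toC.
  transitivity (qpoch (c * Cexpi th) q j * qpoch (c * Cexpi (- th)) q j *
     (1 - c * (Cexpi th + Cexpi (- th)) * RtoC (q ^ j) + c * c * (Cexpi th * Cexpi (- th)) * RtoC (q ^ j) * RtoC (q ^ j)))%C.
  cring. rewrite H. cring.
Qed.

Lemma telescope (F : nat -> C) N : Csum (fun j => F (S j) - F j)%C N = (F N - F O)%C.
Proof. induction N; simpl; toC. cring. rewrite IHN. cring. Qed.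

Definition Ek q c d m j : C :=
  match j with O => RtoC 0 | S j' => (Dk q c d (S m) j' / (c * RtoC (q ^ j')))%C end.

Definition coef_id_stmt q c d m j : Prop :=
  Dk q c d (S (S m)) j =
   (Dk q c d (S m) j / (c * RtoC (q ^ j)) * (1 + c * c * RtoC (q ^ j) * RtoC (q ^ j))
    - (c + d) * RtoC (q ^ S m) * Dk q c d (S m) j
    - (1 - RtoC (q ^ S m)) * (1 - c * d * RtoC (q ^ m)) * Dk q c d m j - Ek q c d m j)%C.

Lemma Q_rec_from_coef q c d th m : 0 < q -> c <> RtoC 0 ->
  (forall j, (j < S (S (S m)))%nat -> coef_id_stmt q c d m j) ->
  al_salam_chihara (S (S m)) th c d q =
   ((ee th - (c + d) * RtoC (q ^ S m)) * al_salam_chihara (S m) th c d q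
    - (1 - RtoC (q ^ S m)) * (1 - c * d * RtoC (q ^ m)) * al_salam_chihara m th c d q)%C.
Proof.
  intros Hq Hc Hcoef. rewrite !(Q_expand q c d th _ (S (S (S m)))) by (auto; lia).
  set (F := fun j => (Ek q c d m j * phi q th c j)%C).
  transitivity (Csum (fun j =>
     (ee th - (c + d) * RtoC (q ^ S m)) * (Dk q c d (S m) j * phi q th c j)
     - (1 - RtoC (q ^ S m)) * (1 - c * d * RtoC (q ^ m)) * (Dk q c d m j * phi q th c j)
     + (F (S j) - F j))%C (S (S (S m)))).
  - apply Csum_ext. intros j Hj. rewrite (Hcoef j Hj). unfold F. simpl Ek at 1. rewrite phi_S.
    assert (RtoC (q ^ j) <> RtoC 0). { intro E. apply RtoC_inj in E. apply (pow_nonzero q j); lra. }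
    toC. apply Ceq_help. simpl Ek. field_simplify; auto.
  - rewrite Csum_plus, Csum_minus, telescope, !Csum_scal.
    assert (F (S (S (S m))) = RtoC 0). { unfold F. simpl Ek. rewrite Dk_zero by (auto; lia). cring. }
    assert (F O = RtoC 0). { unfold F. simpl. cring. }
    rewrite H, H0. cring.
Qed.

Lemma invpow_S q k : q <> 0 -> (RtoC (/ q ^ S k) * RtoC q)%C = RtoC (/ q ^ k).
Proof. intros. rewrite <- RtoC_mult. f_equal. simpl. field. split; auto. apply pow_nonzero; auto. Qed.

Lemma qpoch_inv_down q k j : q <> 0 ->
  qpoch (RtoC (/ q ^ S k)) q (S j) = ((1 - RtoC (/ q ^ S k)) * qpoch (RtoC (/ q ^ k)) q j)%C.
Proof. intros. rewrite qpoch_shift, invpow_S; auto. Qed.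

Lemma qpow_ne1 q k : 0 < q < 1 -> (1 - RtoC (/ q ^ S k))%C <> RtoC 0.
Proof.
  intros Hq E. rewrite <- RtoC_minus in E. apply RtoC_inj in E.
  assert (q ^ S k < 1). { simpl. pose proof (pow_le1 q k ltac:(lra)). nra. }
  assert (0 < q ^ S k) by (apply pow_lt; lra).
  assert (/ q ^ S k > 1). { rewrite <- Rinv_1. apply Rinv_lt_contravar; lra. } lra.
Qed.

Lemma qpoch_inv_up q k j : 0 < q < 1 ->
  qpoch (RtoC (/ q ^ k)) q j = (qpoch (RtoC (/ q ^ S k)) q (S j) / (1 - RtoC (/ q ^ S k)))%C.
Proof. intros. rewrite qpoch_inv_down by lra. pose proof (qpow_ne1 q k H). toC. apply Ceq_help. field. auto. Qed.

Lemma qpoch_cd_down q (c d : C) j s :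
  qpoch (c * d * RtoC (q ^ j))%C q (S s) = ((1 - c * d * RtoC (q ^ j)) * qpoch (c * d * RtoC (q ^ S j)) q s)%C.
Proof. rewrite qpoch_shift. f_equal. f_equal. rewrite RtoC_powS. toC. cring. Qed.

Lemma qpoch_q_nz q n : 0 < q < 1 -> qpoch (RtoC q) q n <> RtoC 0.
Proof.
  intros Hq. induction n. simpl. toC. intro E. apply RtoC_inj in E. lra.
  rewrite qpoch_S. toC. apply Cmult_neq_0; auto. rewrite <- RtoC_mult, <- RtoC_minus.
  intro E. apply RtoC_inj in E. pose proof (pow_le1 q n ltac:(lra)). pose proof (pow_lt q n ltac:(lra)). nra.
Qed.
End Aux2.

Module AuxT.
Import Complex Aux Aux2.

Lemma coef_gen q c d n s : 0 < q < 1 -> c <> RtoC 0 -> coef_id_stmt q c d (n + 1 + s) (S n).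
Proof.
  intros Hq Hc. unfold coef_id_stmt, Ek, Dk.
  replace (S (S (n + 1 + s)) - S n)%nat with (S (S s)) by lia.
  replace (S (n + 1 + s) - S n)%nat with (S s) by lia.
  replace (n + 1 + s - S n)%nat with s by lia.
  replace (S (n + 1 + s) - n)%nat with (S (S s)) by lia.
  rewrite (qpoch_S (c * d * RtoC (q ^ S n))%C q (S s)), (qpoch_S (c * d * RtoC (q ^ S n))%C q s).
  rewrite (qpoch_cd_down q c d n (S s)), (qpoch_S (c * d * RtoC (q ^ S n))%C q s).
  rewrite (qpoch_inv_down q (S (n + 1 + s)) n) by lra.
  rewrite (qpoch_S (RtoC (/ q ^ S (n + 1 + s))) q n).
  rewrite (qpoch_inv_up q (n + 1 + s) (S n)) by lra.
  rewrite (qpoch_S (RtoC (/ q ^ S (n + 1 + s))) q (S n)), (qpoch_S (RtoC (/ q ^ S (n + 1 + s))) q n).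
  rewrite (qpoch_S (RtoC q) q n).
  pose proof (qpoch_q_nz q n Hq).
  set (A := qpoch (RtoC (/ q ^ S (n + 1 + s))) q n) in *.
  set (Pq := qpoch (RtoC q) q n) in *.
  set (b := qpoch (c * d * RtoC (q ^ S n))%C q s) in *.
  assert (HX : 0 < q ^ n) by (apply pow_lt; lra). assert (HS : 0 < q ^ s) by (apply pow_lt; lra).
  replace (q ^ S (S (n + 1 + s))) with (q ^ n * q ^ s * (q * q * q)) by (rewrite <- !pow_add; simpl; replace (n + 1 + s)%nat with (n + s + 1)%nat by lia; rewrite !pow_add; simpl; ring).
  replace (q ^ S (n + 1 + s)) with (q ^ n * q ^ s * (q * q)) by (replace (n + 1 + s)%nat with (n + s + 1)%nat by lia; simpl; rewrite !pow_add; simpl; ring).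
  replace (q ^ (n + 1 + s)) with (q ^ n * q ^ s * q) by (replace (n + 1 + s)%nat with (n + s + 1)%nat by lia; rewrite !pow_add; simpl; ring).
  replace (q ^ S n) with (q * q ^ n) by reflexivity.
  replace (q ^ S s) with (q * q ^ s) by reflexivity.
  replace (c ^ S (S (n + 1 + s)))%C with (c ^ n * c ^ s * (c * c * c))%C by (replace (S (S (n + 1 + s))) with (n + s + 3)%nat by lia; rewrite !Cpow_add_r; simpl; toC; cring).
  replace (c ^ S (n + 1 + s))%C with (c ^ n * c ^ s * (c * c))%C by (replace (S (n + 1 + s)) with (n + s + 2)%nat by lia; rewrite !Cpow_add_r; simpl; toC; cring).
  replace (c ^ (n + 1 + s))%C with (c ^ n * c ^ s * c)%C by (replace (n + 1 + s)%nat with (n + s + 1)%nat by lia; rewrite !Cpow_add_r; simpl; toC; cring).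
  rewrite !RtoC_inv by (apply Rgt_not_eq; repeat apply Rmult_lt_0_compat; lra).
  rewrite !RtoC_mult.
  set (X := RtoC (q ^ n)) in *. set (S := RtoC (q ^ s)) in *. set (Q := RtoC q) in *.
  pose proof (pow_le1 q n ltac:(lra)). pose proof (pow_le1 q s ltac:(lra)).
  assert (q ^ n * q ^ s <= 1) by nra. assert (0 < q ^ n * q ^ s) by nra.
  apply Ceq_help. field. unfold X, S, Q in *. clear X S Q.
  repeat split; try assumption; try (apply Cpow_nz; assumption);
   cbv beta; rewrite <- ?RtoC_mult, <- ?RtoC_minus; intro E; apply RtoC_inj in E; try nra.
Qed.

Lemma qpoch_0 x q : qpoch x q 0 = RtoC 1.
Proof. reflexivity. Qed.

Ltac nz_side q := repeat split; try assumption; try (apply Cpow_nz; assumption);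
   try (cbv beta; rewrite <- ?RtoC_mult, <- ?RtoC_minus; let E := fresh in intro E; apply RtoC_inj in E; nra).

Lemma coef_j0 q c d m : 0 < q < 1 -> c <> RtoC 0 -> coef_id_stmt q c d m O.
Proof.
  intros Hq Hc. unfold coef_id_stmt, Ek, Dk. rewrite !Nat.sub_0_r, !qpoch_0.
  rewrite (qpoch_S (c * d * RtoC (q ^ 0))%C q (S m)), (qpoch_S (c * d * RtoC (q ^ 0))%C q m).
  set (B := qpoch (c * d * RtoC (q ^ 0))%C q m).
  replace (q ^ S m) with (q * q ^ m) by reflexivity. simpl (q ^ 0).
  replace (c ^ S (S m))%C with (c ^ m * (c * c))%C by (simpl; toC; cring).
  replace (c ^ S m)%C with (c ^ m * c)%C by (simpl; toC; cring).
  rewrite !RtoC_mult.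
  pose proof (pow_le1 q m ltac:(lra)). pose proof (pow_lt q m ltac:(lra)).
  set (X := RtoC (q ^ m)) in *. set (Q := RtoC q) in *.
  apply Ceq_help. field. unfold X, Q in *. clear X Q. nz_side q.
Qed.

Lemma coef_r1 q c d m : 0 < q < 1 -> c <> RtoC 0 -> coef_id_stmt q c d m (S m).
Proof.
  intros Hq Hc. unfold coef_id_stmt, Ek.
  rewrite (Dk_zero q c d m (S m)) by (lra || lia).
  unfold Dk.
  replace (S (S m) - S m)%nat with 1%nat by lia. replace (S m - S m)%nat with 0%nat by lia.
  replace (S m - m)%nat with 1%nat by lia.
  rewrite (qpoch_inv_down q (S m) m) by lra.
  rewrite (qpoch_S (RtoC (/ q ^ S m)) q m), (qpoch_S (RtoC q) q m).
  rewrite !(qpoch_S _ q 0), !qpoch_0.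
  pose proof (qpoch_q_nz q m Hq).
  set (A := qpoch (RtoC (/ q ^ S m)) q m) in *.
  set (Pq := qpoch (RtoC q) q m) in *.
  pose proof (pow_le1 q m ltac:(lra)). pose proof (pow_lt q m ltac:(lra)).
  replace (q ^ S (S m)) with (q ^ m * (q * q)) by (simpl; ring).
  replace (q ^ S m) with (q ^ m * q) by (simpl; ring). simpl (q ^ 0).
  replace (c ^ S (S m))%C with (c ^ m * (c * c))%C by (simpl; toC; cring).
  replace (c ^ S m)%C with (c ^ m * c)%C by (simpl; toC; cring).
  rewrite !RtoC_inv by (apply Rgt_not_eq; repeat apply Rmult_lt_0_compat; lra).
  rewrite !RtoC_mult.
  set (X := RtoC (q ^ m)) in *. set (Q := RtoC q) in *.
  apply Ceq_help. field. unfold X, Q in *. clear X Q. nz_side q.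
Qed.

Lemma coef_r0 q c d m : 0 < q < 1 -> c <> RtoC 0 -> coef_id_stmt q c d m (S (S m)).
Proof.
  intros Hq Hc. unfold coef_id_stmt, Ek.
  rewrite (Dk_zero q c d m (S (S m))) by (lra || lia).
  rewrite (Dk_zero q c d (S m) (S (S m))) by (lra || lia).
  unfold Dk.
  replace (S (S m) - S (S m))%nat with 0%nat by lia. replace (S m - S m)%nat with 0%nat by lia.
  rewrite (qpoch_inv_down q (S m) (S m)) by lra.
  rewrite (qpoch_S (RtoC q) q (S m)), !qpoch_0.
  pose proof (qpoch_q_nz q (S m) Hq).
  set (A := qpoch (RtoC (/ q ^ S m)) q (S m)) in *.
  set (Pq := qpoch (RtoC q) q (S m)) in *.
  pose proof (pow_le1 q m ltac:(lra)). pose proof (pow_lt q m ltac:(lra)).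
  replace (q ^ S (S m)) with (q ^ m * (q * q)) by (simpl; ring).
  replace (q ^ S m) with (q ^ m * q) by (simpl; ring).
  replace (c ^ S (S m))%C with (c ^ m * (c * c))%C by (simpl; toC; cring).
  replace (c ^ S m)%C with (c ^ m * c)%C by (simpl; toC; cring).
  rewrite !RtoC_inv by (apply Rgt_not_eq; repeat apply Rmult_lt_0_compat; lra).
  rewrite !RtoC_mult.
  set (X := RtoC (q ^ m)) in *. set (Q := RtoC q) in *.
  apply Ceq_help. field. unfold X, Q in *. clear X Q. nz_side q.
Qed.

Lemma coef_all q c d m j : 0 < q < 1 -> c <> RtoC 0 -> (j < S (S (S m)))%nat -> coef_id_stmt q c d m j.
Proof.
  intros Hq Hc Hj. destruct j as [|n]. apply coef_j0; auto.
  destruct (Nat.lt_trichotomy n m) as [H|[H|H]].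
  - replace m with (n + 1 + (m - n - 1))%nat by lia. apply coef_gen; auto.
  - subst. apply coef_r1; auto.
  - assert (n = S m) by lia. subst. apply coef_r0; auto.
Qed.

Lemma Q_rec q c d th m : 0 < q < 1 -> c <> RtoC 0 ->
  al_salam_chihara (S (S m)) th c d q =
   ((ee th - (c + d) * RtoC (q ^ S m)) * al_salam_chihara (S m) th c d q
    - (1 - RtoC (q ^ S m)) * (1 - c * d * RtoC (q ^ m)) * al_salam_chihara m th c d q)%C.
Proof. intros. apply Q_rec_from_coef; try lra; auto. intros. apply coef_all; auto. Qed.

Lemma Q_0 q c d th : al_salam_chihara 0 th c d q = RtoC 1.
Proof. unfold al_salam_chihara. simpl. toC. unfold qpoch_list. simpl. toC. apply Ceq_help. field. Qed.

End AuxT.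
Module Aux3.
Import Complex Aux Aux2 AuxT.

Definition wconv (u v : nat -> C) n := Csum (fun i => u i * v (n - i)%nat)%C (S n).
Definition zconv (q : R) (u v : nat -> C) n := Csum (fun i => RtoC (q ^ i) * u i * v (n - i)%nat)%C (S n).

Section Conv.
End Conv.

Lemma conv_R1 q (u v : nat -> C) (al ga be de : C) n :
  (forall i, (1 - RtoC (q ^ S i)) * u (S i) = (al - ga * RtoC (q ^ i)) * u i)%C ->
  (forall l, (1 - RtoC (q ^ S l)) * v (S l) = (be - de * RtoC (q ^ l)) * v l)%C ->
  ((1 - RtoC (q ^ S n)) * wconv u v (S n) =
    (al - de * RtoC (q ^ n)) * wconv u v n + (be - ga) * zconv q u v n)%C /\
  (wconv u v (S n) - zconv q u v (S n) = al * wconv u v n - ga * zconv q u v n)%C.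
Proof.
  intros Hu Hv.
  assert (HA : Csum (fun i => (1 - RtoC (q ^ i)) * u i * v (S n - i)%nat)%C (S (S n)) =
     (al * wconv u v n - ga * zconv q u v n)%C).
  { rewrite Csum_first. simpl (q ^ 0). unfold wconv, zconv. rewrite <- !Csum_scal, <- Csum_minus.
    toC. replace (1 - RtoC 1)%C with (RtoC 0) by cring. rewrite Cmult_0_l, Cmult_0_l, Cplus_0_l.
    apply Csum_ext. intros i Hi. simpl (S n - S i)%nat. rewrite Hu. cring. }
  assert (HB : Csum (fun i => RtoC (q ^ i) * u i * ((1 - RtoC (q ^ (S n - i)%nat)) * v (S n - i)%nat))%C (S (S n)) =
     (be * zconv q u v n - de * RtoC (q ^ n) * wconv u v n)%C).
  { rewrite Csum_S. replace (S n - S n)%nat with 0%nat by lia. simpl (q ^ 0).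
    unfold wconv, zconv. rewrite <- !Csum_scal, <- Csum_minus.
    toC. replace (1 - RtoC 1)%C with (RtoC 0) by cring. rewrite Cmult_0_l, Cmult_0_r, Cplus_0_r.
    apply Csum_ext. intros i Hi. replace (S n - i)%nat with (S (n - i)) by lia. rewrite Hv.
    replace (q ^ n) with (q ^ i * q ^ (n - i)) by (rewrite <- pow_add; f_equal; lia).
    rewrite RtoC_mult. cring. }
  split.
  - transitivity (Csum (fun i => (1 - RtoC (q ^ i)) * u i * v (S n - i)%nat)%C (S (S n)) +
       Csum (fun i => RtoC (q ^ i) * u i * ((1 - RtoC (q ^ (S n - i)%nat)) * v (S n - i)%nat))%C (S (S n)))%C.
    + unfold wconv. rewrite <- Csum_scal, <- Csum_plus. apply Csum_ext. intros i Hi.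
      replace (q ^ S n) with (q ^ i * q ^ (S n - i)) by (rewrite <- pow_add; f_equal; lia).
      rewrite RtoC_mult. cring.
    + rewrite HA, HB. cring.
  - etransitivity; [|exact HA]. unfold wconv, zconv. rewrite <- Csum_minus. apply Csum_ext. intros. cring.
Qed.

Lemma conv_rec q (u v : nat -> C) (al ga be de : C) n :
  (forall i, (1 - RtoC (q ^ S i)) * u (S i) = (al - ga * RtoC (q ^ i)) * u i)%C ->
  (forall l, (1 - RtoC (q ^ S l)) * v (S l) = (be - de * RtoC (q ^ l)) * v l)%C ->
  (al * be = 1)%C ->
  ((1 - RtoC (q ^ S (S n))) * wconv u v (S (S n)) =
    (al + be - (ga + de) * RtoC (q ^ S n)) * wconv u v (S n) - (1 - ga * de * RtoC (q ^ n)) * wconv u v n)%C.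
Proof.
  intros Hu Hv Hab.
  destruct (conv_R1 q u v al ga be de (S n) Hu Hv) as [H1 _].
  destruct (conv_R1 q u v al ga be de n Hu Hv) as [H2 H3].
  rewrite H1.
  assert (Hz : zconv q u v (S n) = (wconv u v (S n) - al * wconv u v n + ga * zconv q u v n)%C).
  { transitivity (wconv u v (S n) - (wconv u v (S n) - zconv q u v (S n)))%C. cring. rewrite H3. cring. }
  rewrite Hz.
  assert (Hz2 : ((be - ga) * zconv q u v n = (1 - RtoC (q ^ S n)) * wconv u v (S n) - (al - de * RtoC (q ^ n)) * wconv u v n)%C).
  { rewrite H2. cring. }
  replace (q ^ S n) with (q * q ^ n) in * by reflexivity. rewrite RtoC_mult in *.
  transitivity ((al - de * (RtoC q * RtoC (q ^ n))) * wconv u v (S n) +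
      (be - ga) * wconv u v (S n) - al * (be - ga) * wconv u v n + ga * ((be - ga) * zconv q u v n))%C.
  cring. rewrite Hz2.
  transitivity ((al + be - (ga + de) * (RtoC q * RtoC (q ^ n))) * wconv u v (S n) - (al * be - ga * de * RtoC (q ^ n)) * wconv u v n)%C.
  cring. rewrite Hab. cring.
Qed.
End Aux3.

Module Aux4.
Import Complex Aux Aux2 AuxT Aux3.

Definition uu q th (c : C) i : C :=
  (qpoch (c * Cexpi (- th)) q i * Cexpi th ^ i / qpoch (RtoC q) q i)%C.
Definition vv q th (d : C) l : C :=
  (qpoch (d * Cexpi th) q l * Cexpi (- th) ^ l / qpoch (RtoC q) q l)%C.
Definition gg q th c d n : C := (al_salam_chihara n th c d q / qpoch (RtoC q) q n)%C.

Lemma one_minus_qpow_nz q i : 0 < q < 1 -> (1 - RtoC q * RtoC (q ^ i))%C <> RtoC 0.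
Proof.
  intros Hq E. rewrite <- RtoC_mult, <- RtoC_minus in E. apply RtoC_inj in E.
  pose proof (pow_le1 q i ltac:(lra)). pose proof (pow_lt q i ltac:(lra)). nra.
Qed.

Lemma uu_rec q th c i : 0 < q < 1 ->
  ((1 - RtoC (q ^ S i)) * uu q th c (S i) = (Cexpi th - c * RtoC (q ^ i)) * uu q th c i)%C.
Proof.
  intros Hq. unfold uu. rewrite !qpoch_S. replace (q ^ S i) with (q * q ^ i) by reflexivity.
  rewrite RtoC_mult. pose proof (qpoch_q_nz q i Hq). pose proof (one_minus_qpow_nz q i Hq).
  pose proof (Cexpi_mul th). simpl Cpow.
  transitivity (qpoch (c * Cexpi (- th)) q i * Cexpi th ^ i / qpoch (RtoC q) q i * (Cexpi th - c * (Cexpi th * Cexpi (-th)) * RtoC (q ^ i)))%C.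
  apply Ceq_help. field. auto. rewrite H1. apply Ceq_help. field. auto.
Qed.

Lemma vv_rec q th d l : 0 < q < 1 ->
  ((1 - RtoC (q ^ S l)) * vv q th d (S l) = (Cexpi (- th) - d * RtoC (q ^ l)) * vv q th d l)%C.
Proof.
  intros Hq. unfold vv. rewrite !qpoch_S. replace (q ^ S l) with (q * q ^ l) by reflexivity.
  rewrite RtoC_mult. pose proof (qpoch_q_nz q l Hq). pose proof (one_minus_qpow_nz q l Hq).
  pose proof (Cexpi_mul th). simpl Cpow.
  transitivity (qpoch (d * Cexpi th) q l * Cexpi (- th) ^ l / qpoch (RtoC q) q l * (Cexpi (- th) - d * (Cexpi th * Cexpi (-th)) * RtoC (q ^ l)))%C.
  apply Ceq_help. field. auto. rewrite H1. apply Ceq_help. field. auto.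
Qed.

Lemma Q_1 q c d th : 0 < q < 1 -> c <> RtoC 0 ->
  al_salam_chihara 1 th c d q = (Cexpi th + Cexpi (- th) - c - d)%C.
Proof.
  intros Hq Hc. rewrite (Q_expand q c d th 1 2) by (lra || lia).
  simpl Csum. unfold Dk, phi. simpl (1 - 0)%nat. simpl (1 - 1)%nat. rewrite !qpoch_0.
  rewrite !(qpoch_S _ q 0), !qpoch_0. simpl (q ^ 0). simpl (q ^ 1). simpl Cpow.
  pose proof (Cexpi_mul th).
  rewrite Rmult_1_r, RtoC_inv by lra.
  assert (RtoC q <> RtoC 0) by (intro E; apply RtoC_inj in E; lra).
  assert ((1 - RtoC q * 1)%C <> RtoC 0).
  { rewrite Cmult_1_r, <- RtoC_minus. intro E; apply RtoC_inj in E; lra. }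
  transitivity ((1 - c * d) / c - (1 - c * (Cexpi th + Cexpi (- th)) + c * c * (Cexpi th * Cexpi (- th))) / c)%C.
  toC. set (Q := RtoC q) in *. apply Ceq_help. field. { repeat split; auto. cbv beta. rewrite <- (Cmult_1_r Q). exact H1. } rewrite H. apply Ceq_help. field. auto.
Qed.

Lemma gg_rec q th c d m : 0 < q < 1 -> c <> RtoC 0 ->
  ((1 - RtoC (q ^ S (S m))) * gg q th c d (S (S m)) =
   (Cexpi th + Cexpi (- th) - (c + d) * RtoC (q ^ S m)) * gg q th c d (S m)
   - (1 - c * d * RtoC (q ^ m)) * gg q th c d m)%C.
Proof.
  intros Hq Hc. unfold gg. rewrite Q_rec by auto. unfold ee.
  rewrite !qpoch_S. pose proof (qpoch_q_nz q m Hq).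
  pose proof (one_minus_qpow_nz q m Hq). pose proof (one_minus_qpow_nz q (S m) Hq).
  replace (q ^ S (S m)) with (q * q ^ S m) by reflexivity.
  replace (q ^ S m) with (q * q ^ m) in * by reflexivity. rewrite !RtoC_mult in *.
  apply Ceq_help. field. auto.
Qed.

Lemma gg_eq_w q th c d n : 0 < q < 1 -> c <> RtoC 0 ->
  gg q th c d n = wconv (uu q th c) (vv q th d) n.
Proof.
  intros Hq Hc.
  assert (forall n, gg q th c d n = wconv (uu q th c) (vv q th d) n /\
                    gg q th c d (S n) = wconv (uu q th c) (vv q th d) (S n)).
  { induction n0.
    - split.
      + unfold gg, wconv. rewrite Q_0. simpl. unfold uu, vv. simpl. toC. apply Ceq_help. field.
      + unfold gg, wconv. rewrite Q_1 by auto. simpl Csum. unfold uu, vv. simpl (1 - 0)%nat. simpl (1-1)%nat.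
        rewrite !(qpoch_S _ q 0), !qpoch_0. simpl (q ^ 0). simpl Cpow. pose proof (Cexpi_mul th).
        assert ((1 - RtoC q * 1)%C <> RtoC 0).
        { rewrite Cmult_1_r, <- RtoC_minus. intro E; apply RtoC_inj in E; lra. }
        toC. set (Q := RtoC q) in *.
        transitivity ((Cexpi th - c * (Cexpi th * Cexpi (- th)) + Cexpi (- th) - d * (Cexpi th * Cexpi (- th))) / (1 - Q * 1))%C.
        rewrite H. apply Ceq_help. field. cbv beta. rewrite <- (Cmult_1_r Q). exact H0.
        apply Ceq_help. field. cbv beta. rewrite <- (Cmult_1_r Q). exact H0.
    - destruct IHn0 as [H1 H2]. split; auto.
      pose proof (gg_rec q th c d n0 Hq Hc).
      pose proof (conv_rec q (uu q th c) (vv q th d) (Cexpi th) c (Cexpi (- th)) d n0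
                   (fun i => uu_rec q th c i Hq) (fun l => vv_rec q th d l Hq) (Cexpi_mul th)).
      rewrite <- H1, <- H2 in H0.
      assert ((1 - RtoC (q ^ S (S n0)))%C <> RtoC 0).
      { replace (q ^ S (S n0)) with (q * q ^ S n0) by reflexivity. rewrite RtoC_mult. apply one_minus_qpow_nz; auto. }
      apply (Cmult_eq_reg_l _ _ _ H3) || idtac.
      transitivity (((1 - RtoC (q ^ S (S n0))) * gg q th c d (S (S n0))) / (1 - RtoC (q ^ S (S n0))))%C.
      apply Ceq_help. field. auto. rewrite H, <- H0. apply Ceq_help. field. auto. }
  apply H.
Qed.
End Aux4.

Module Aux5.
Import Complex Aux Aux2 AuxT Aux3 Aux4.

Lemma Cmod_expi th : Cmod (Cexpi th) = 1.
Proof. unfold Cmod, Cexpi. simpl fst; simpl snd. replace (cos th ^ 2 + sin th ^ 2) with 1. apply sqrt_1.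
  pose proof (sin2_cos2 th). unfold Rsqr in H. nra. Qed.

Lemma qpoch_upper' x q n : 0 < q < 1 -> Cmod (qpoch x q n) <= exp (Cmod x / (1 - q)).
Proof.
  intros Hq. eapply Rle_trans. apply qpoch_upper; auto. apply exp_mono.
  pose proof (Cmod_ge_0 x). pose proof (pow_lt q n ltac:(lra)).
  unfold Rdiv. rewrite <- Rmult_assoc. apply Rmult_le_compat_r. left; apply Rinv_0_lt_compat; lra. nra.
Qed.

Definition dq q := exp (- (q * (1 / (1 - q)) / (1 - q))).

Lemma qpoch_q_lower q n : 0 < q < 1 -> dq q <= Cmod (qpoch (RtoC q) q n).
Proof.
  intros Hq. eapply Rle_trans. 2: apply qpoch_lower; auto.
  2: rewrite Cmod_R, Rabs_pos_eq; lra.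
  rewrite Cmod_R, Rabs_pos_eq by lra. unfold dq. apply exp_mono. apply Ropp_le_contravar.
  pose proof (pow_lt q n ltac:(lra)). unfold Rdiv.
  apply Rmult_le_compat_r. left; apply Rinv_0_lt_compat; lra.
  apply Rmult_le_compat_l. lra. apply Rmult_le_compat_r. left; apply Rinv_0_lt_compat; lra. lra.
Qed.

Lemma dq_pos q : 0 < dq q.
Proof. apply exp_pos. Qed.

Lemma uu_bound q th c i : 0 < q < 1 -> Cmod (uu q th c i) <= exp (Cmod c / (1 - q)) / dq q.
Proof.
  intros Hq. unfold uu. unfold Cdiv. rewrite !Cmod_mult, Cmod_inv by (apply qpoch_q_nz; auto).
  rewrite Cmod_pow, Cmod_expi, pow1, Rmult_1_r.
  pose proof (qpoch_upper' (c * Cexpi (- th))%C q i Hq). rewrite Cmod_mult, Cmod_expi, Rmult_1_r in H.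
  pose proof (qpoch_q_lower q i Hq). pose proof (dq_pos q).
  unfold Rdiv. apply Rmult_le_compat; auto using Cmod_ge_0.
  left. apply Rinv_0_lt_compat. lra. apply Rinv_le_contravar; auto.
Qed.

Lemma vv_bound q th d l : 0 < q < 1 -> Cmod (vv q th d l) <= exp (Cmod d / (1 - q)) / dq q.
Proof.
  intros Hq. unfold vv. unfold Cdiv. rewrite !Cmod_mult, Cmod_inv by (apply qpoch_q_nz; auto).
  rewrite Cmod_pow, Cmod_expi, pow1, Rmult_1_r.
  pose proof (qpoch_upper' (d * Cexpi th)%C q l Hq). rewrite Cmod_mult, Cmod_expi, Rmult_1_r in H.
  pose proof (qpoch_q_lower q l Hq). pose proof (dq_pos q).
  unfold Rdiv. apply Rmult_le_compat; auto using Cmod_ge_0.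
  left. apply Rinv_0_lt_compat. lra. apply Rinv_le_contravar; auto.
Qed.

Lemma Rsum_le f g n : (forall i, (i < n)%nat -> f i <= g i) -> Rsum f n <= Rsum g n.
Proof. induction n; intros H; simpl. lra. pose proof (H n (le_n _)). pose proof (IHn (fun i Hi => H i ltac:(lia))). lra. Qed.

Lemma Rsum_const K n : Rsum (fun _ => K) n = INR n * K.
Proof. induction n; simpl Rsum. simpl. ring. rewrite IHn, S_INR. ring. Qed.

Definition Bg q c d := exp (Cmod c / (1 - q)) / dq q * (exp (Cmod d / (1 - q)) / dq q).

Lemma Bg_pos q c d : 0 <= Bg q c d.
Proof. unfold Bg. pose proof (dq_pos q). pose proof (exp_pos (Cmod c / (1 - q))). pose proof (exp_pos (Cmod d / (1 - q))).
  apply Rmult_le_pos; left; apply Rdiv_lt_0_compat; auto. Qed.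

Lemma gg_bound q th c d n : 0 < q < 1 -> c <> RtoC 0 -> Cmod (gg q th c d n) <= INR (S n) * Bg q c d.
Proof.
  intros Hq Hc. rewrite gg_eq_w by auto. unfold wconv. eapply Rle_trans. apply Cmod_Csum.
  rewrite <- Rsum_const. apply Rsum_le. intros i Hi. rewrite Cmod_mult. unfold Bg.
  apply Rmult_le_compat; auto using Cmod_ge_0, uu_bound, vv_bound.
Qed.

Lemma lin_geom y k : 0 <= y < 1 -> INR (S k) * y ^ k <= 1 / (1 - y).
Proof.
  intros Hy. assert (INR (S k) * y ^ k * (1 - y) <= 1 - y ^ S k).
  { induction k. simpl. lra.
    rewrite S_INR. simpl (y ^ S k). simpl (y ^ S (S k)). rewrite S_INR in IHk. change (y ^ S k) with (y * y ^ k) in IHk.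
    pose proof (pow_le y k ltac:(lra)). pose proof (pow_le1 y k ltac:(lra)).
    assert (y * ((INR k + 1) * y ^ k * (1 - y)) <= y * (1 - y * y ^ k)) by (apply Rmult_le_compat_l; lra).
    assert (y * y ^ k <= 1) by nra.
    assert (y * y ^ k * (1 - y) <= 1 - y) by nra.
    rewrite S_INR. replace ((INR k + 1 + 1) * (y * y ^ k) * (1 - y)) with (y * ((INR k + 1) * y ^ k * (1 - y)) + y * y ^ k * (1 - y)) by ring.
    replace (1 - y * (y * y ^ k)) with ((y * (1 - y * y ^ k)) + (1 - y)) by ring. lra. }
  apply Rmult_le_reg_r with (1 - y). lra. unfold Rdiv. rewrite Rmult_1_l, Rinv_l by lra.
  pose proof (pow_le y (S k) ltac:(lra)). lra.
Qed.

Lemma gg_0 q th c d : gg q th c d 0 = RtoC 1.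
Proof. unfold gg. rewrite Q_0. simpl. toC. apply Ceq_help. field. Qed.

Lemma GG_series q th c d (r0 lam : R) (s : C) : 0 < q < 1 -> c <> RtoC 0 -> 0 <= r0 < 1 -> 0 <= lam <= 1 ->
  Cmod s <= lam * r0 ->
  exists l, Cconv (Csum (fun k => gg q th c d k * s ^ k)%C) l /\
    Cmod (l - 1) <= Bg q c d / (1 - r0 / ((1 + r0) / 2)) * (lam * ((1 + r0) / 2)) / (1 - (1 + r0) / 2).
Proof.
  intros Hq Hc Hr Hl Hs. set (rho := (1 + r0) / 2). set (y := r0 / rho).
  assert (Hrho : 0 < rho < 1) by (unfold rho; lra).
  assert (Hy : 0 <= y < 1). { unfold y. split. apply Rmult_le_pos; [lra|left; apply Rinv_0_lt_compat; lra].
     apply Rmult_lt_reg_r with rho. lra. unfold Rdiv. rewrite Rmult_assoc, Rinv_l by lra. unfold rho. lra. }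
  pose proof (Bg_pos q c d).
  destruct (Csum_geom (fun k => gg q th c d k * s ^ k)%C (Bg q c d / (1 - y)) (lam * rho)) as [l [Hc1 Hb]].
  - apply Rmult_le_pos. auto. left; apply Rinv_0_lt_compat; lra.
  - split. nra. nra.
  - intros k. rewrite Cmod_mult, Cmod_pow.
    pose proof (gg_bound q th c d k Hq Hc).
    assert (Cmod s ^ k <= (lam * r0) ^ k) by (apply pow_incr; split; auto using Cmod_ge_0).
    assert ((lam * r0) ^ k = y ^ k * (lam * rho) ^ k).
    { rewrite <- Rpow_mult_distr. f_equal. unfold y. field. lra. }
    pose proof (lin_geom y k Hy) as HL.
    pose proof (pow_le (lam * rho) k ltac:(nra)). pose proof (pow_le y k ltac:(lra)).
    apply Rle_trans with (INR (S k) * Bg q c d * (Cmod s ^ k)).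
    apply Rmult_le_compat_r. apply pow_le, Cmod_ge_0. auto.
    apply Rle_trans with (INR (S k) * Bg q c d * (y ^ k * (lam * rho) ^ k)).
    apply Rmult_le_compat_l. apply Rmult_le_pos; auto. apply pos_INR. lra.
    replace (INR (S k) * Bg q c d * (y ^ k * (lam * rho) ^ k)) with (Bg q c d * (INR (S k) * y ^ k) * (lam * rho) ^ k) by ring.
    apply Rmult_le_compat_r; auto. unfold Rdiv. apply Rmult_le_compat_l; auto.
    unfold Rdiv in HL. rewrite Rmult_1_l in HL. auto.
  - exists l. split; auto. specialize (Hb 1%nat). simpl Csum in Hb. rewrite gg_0 in Hb. simpl Cpow in Hb.
    toC. replace (0 + 1 * 1)%C with (RtoC 1) in Hb by cring. eapply Rle_trans. apply Hb.
    rewrite pow_1. unfold Rdiv. apply Rmult_le_compat_l.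
    apply Rmult_le_pos. apply Rmult_le_pos; auto. left; apply Rinv_0_lt_compat; lra. nra.
    apply Rinv_le_contravar. lra. nra.
Qed.
End Aux5.

Module Aux6.
Import Complex Aux Aux2 AuxT Aux3 Aux4 Aux5.

Definition GG q th c d (s : C) : C := Clim (Csum (fun k => gg q th c d k * s ^ k)%C).

Lemma GG_conv q th c d s : 0 < q < 1 -> c <> RtoC 0 -> Cmod s < 1 ->
  Cconv (Csum (fun k => gg q th c d k * s ^ k)%C) (GG q th c d s).
Proof.
  intros Hq Hc Hs. pose proof (Cmod_ge_0 s).
  destruct (GG_series q th c d (Cmod s) 1 s Hq Hc ltac:(lra) ltac:(lra) ltac:(lra)) as [l [H0 _]].
  unfold GG. apply (Cconv_Clim _ l H0).
Qed.

Lemma GG_cont q th c d s : 0 < q < 1 -> c <> RtoC 0 -> Cmod s < 1 ->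
  Cconv (fun N => GG q th c d (RtoC (q ^ N) * s)%C) (RtoC 1).
Proof.
  intros Hq Hc Hs. pose proof (Cmod_ge_0 s) as Hs0.
  set (K := Bg q c d / (1 - (Cmod s) / ((1 + (Cmod s)) / 2)) * ((1 + (Cmod s)) / 2) / (1 - (1 + (Cmod s)) / 2)).
  assert (HK : forall N, Cmod (GG q th c d (RtoC (q ^ N) * s)%C - 1) <= K * q ^ N).
  { intros N. pose proof (pow_lt q N ltac:(lra)). pose proof (pow_le1 q N ltac:(lra)).
    assert (Hm : Cmod (RtoC (q ^ N) * s)%C <= q ^ N * Cmod s).
    { rewrite Cmod_mult, Cmod_R, Rabs_pos_eq by lra. lra. }
    destruct (GG_series q th c d (Cmod s) (q ^ N) (RtoC (q ^ N) * s)%C Hq Hc ltac:(lra) ltac:(lra) Hm) as [l [H1 H2]].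
    unfold GG. rewrite (Clim_eq _ l H1). eapply Rle_trans. apply H2. right. unfold K. field.
    pose proof (Cmod_ge_0 s). split; lra. }
  intros eps He. 
  assert (HK0 : 0 <= K).
  { unfold K. pose proof (Bg_pos q c d). pose proof (Cmod_ge_0 s).
    assert (0 < 1 - (Cmod s) / ((1 + (Cmod s)) / 2)).
    { apply Rlt_Rminus. apply Rmult_lt_reg_r with ((1 + (Cmod s)) / 2). lra. unfold Rdiv at 1.
      rewrite Rmult_assoc, Rinv_l by lra. lra. }
    apply Rmult_le_pos. apply Rmult_le_pos. apply Rmult_le_pos; auto. left; apply Rinv_0_lt_compat; lra. lra.
    left; apply Rinv_0_lt_compat; lra. }
  destruct (pow_lt_1_zero q ltac:(rewrite Rabs_pos_eq; lra) (eps / (K + 1))) as [N HN].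
  apply Rdiv_lt_0_compat; lra. exists N. intros m Hm. specialize (HN m Hm). specialize (HK m).
  rewrite Rabs_pos_eq in HN by (apply pow_le; lra). toC.
  eapply Rle_lt_trans. apply HK.
  apply Rle_lt_trans with ((K + 1) * q ^ m). pose proof (pow_le q m ltac:(lra)). nra.
  apply Rmult_lt_reg_r with (/ (K + 1)). apply Rinv_0_lt_compat; lra.
  replace ((K + 1) * q ^ m * / (K + 1)) with (q ^ m) by (field; lra). auto.
Qed.

Lemma gg_1 q th c d : 0 < q < 1 -> c <> RtoC 0 ->
  ((1 - RtoC q) * gg q th c d 1 = Cexpi th + Cexpi (- th) - c - d)%C.
Proof.
  intros Hq Hc. unfold gg. rewrite Q_1 by auto. rewrite qpoch_S, qpoch_0. simpl (q ^ 0).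
  assert ((1 - RtoC q * RtoC 1)%C <> RtoC 0).
  { rewrite <- RtoC_mult, <- RtoC_minus. intro E; apply RtoC_inj in E; lra. }
  toC. set (Q := RtoC q) in *. apply Ceq_help. field. cbv beta.
  rewrite <- (Cmult_1_r Q). exact H.
Qed.

Lemma GG_partial q th c d (s : C) N : 0 < q < 1 -> c <> RtoC 0 ->
  Csum (fun k => gg q th c d k * s ^ k - gg q th c d k * (RtoC (q ^ k) * s ^ k))%C (S (S N)) =
  (s * ((Cexpi th + Cexpi (- th)) * Csum (fun k => gg q th c d k * s ^ k)%C (S N)
        - (c + d) * Csum (fun k => gg q th c d k * (RtoC (q ^ k) * s ^ k))%C (S N))
   - s * s * (Csum (fun k => gg q th c d k * s ^ k)%C N
        - c * d * Csum (fun k => gg q th c d k * (RtoC (q ^ k) * s ^ k))%C N))%C.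
Proof.
  intros Hq Hc. induction N.
  - simpl Csum. simpl (q ^ 0). simpl (q ^ 1). rewrite gg_0. simpl Cpow. pose proof (gg_1 q th c d Hq Hc).
    rewrite Rmult_1_r. toC.
    transitivity (s * ((1 - RtoC q) * gg q th c d 1))%C. cring. rewrite H. cring.
  - rewrite Csum_S, IHN. rewrite !Csum_S. cbv beta.
    set (B := Csum (fun k => (gg q th c d k * s ^ k)%C) N).
    set (B' := Csum (fun k => (gg q th c d k * (RtoC (q ^ k) * s ^ k))%C) N).
    pose proof (gg_rec q th c d N Hq Hc).
    replace (q ^ S (S N)) with (q * q * q ^ N) in * by (simpl; ring).
    replace (q ^ S N) with (q * q ^ N) in * by (simpl; ring).
    rewrite !RtoC_mult in *.
    replace (s ^ S (S N))%C with (s * s * s ^ N)%C by (simpl; cring).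
    replace (s ^ S N)%C with (s * s ^ N)%C by (simpl; cring).
    set (g2 := gg q th c d (S (S N))) in *. set (g1 := gg q th c d (S N)) in *. set (g0 := gg q th c d N) in *.
    transitivity (s * ((Cexpi th + Cexpi (- th)) * (B + g0 * s ^ N) - (c + d) * (B' + g0 * (RtoC (q ^ N) * s ^ N))) -
      s * s * (B - c * d * B') + s * s * s ^ N * ((1 - RtoC q * RtoC q * RtoC (q ^ N)) * g2))%C.
    cring. rewrite H. cring.
Qed.

Lemma Cmod_qs q (s : C) : 0 < q < 1 -> Cmod s < 1 -> Cmod (RtoC q * s)%C < 1.
Proof. intros Hq Hs. rewrite Cmod_mult, Cmod_R, Rabs_pos_eq by lra. pose proof (Cmod_ge_0 s). nra. Qed.

Lemma GG_FE q th c d (s : C) : 0 < q < 1 -> c <> RtoC 0 -> Cmod s < 1 ->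
  (GG q th c d s * (1 - s * Cexpi th) * (1 - s * Cexpi (- th)) =
   GG q th c d (RtoC q * s) * (1 - c * s) * (1 - d * s))%C.
Proof.
  intros Hq Hc Hs.
  set (G := GG q th c d s). set (G' := GG q th c d (RtoC q * s)%C).
  assert (H1 : Cconv (Csum (fun k => gg q th c d k * s ^ k)%C) G) by (apply GG_conv; auto).
  assert (H2 : Cconv (Csum (fun k => gg q th c d k * (RtoC (q ^ k) * s ^ k))%C) G').
  { apply (Cconv_ext (Csum (fun k => gg q th c d k * (RtoC q * s) ^ k)%C)).
    intros n. apply Csum_ext. intros. rewrite Cpow_mult_l, RtoC_pow. reflexivity.
    apply GG_conv; auto. apply Cmod_qs; auto. }
  assert (E : (G - G' = s * ((Cexpi th + Cexpi (- th)) * G - (c + d) * G') - s * s * (G - c * d * G'))%C).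
  { apply (Cconv_unique (fun N => Csum (fun k => gg q th c d k * s ^ k - gg q th c d k * (RtoC (q ^ k) * s ^ k))%C (S (S N)))).
    - apply (Cconv_ext (fun N => Csum (fun k => gg q th c d k * s ^ k)%C (N + 2) - Csum (fun k => gg q th c d k * (RtoC (q ^ k) * s ^ k))%C (N + 2))%C).
      intros N. rewrite Csum_minus. replace (N + 2)%nat with (S (S N)) by lia. reflexivity.
      apply Cconv_minus; apply (Cconv_shift _ _ 2); auto.
    - apply (Cconv_ext (fun N => s * ((Cexpi th + Cexpi (- th)) * Csum (fun k => gg q th c d k * s ^ k)%C (N + 1)
        - (c + d) * Csum (fun k => gg q th c d k * (RtoC (q ^ k) * s ^ k))%C (N + 1))
        - s * s * (Csum (fun k => gg q th c d k * s ^ k)%C N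
        - c * d * Csum (fun k => gg q th c d k * (RtoC (q ^ k) * s ^ k))%C N))%C).
      intros N. rewrite GG_partial by auto. rewrite Nat.add_1_r. reflexivity.
      apply Cconv_minus; apply Cconv_mult; try apply Cconv_const.
      apply Cconv_minus; apply Cconv_mult; try apply Cconv_const; apply (Cconv_shift _ _ 1); auto.
      apply Cconv_minus; auto. apply Cconv_mult; auto. apply Cconv_const. }
  pose proof (Cexpi_mul th).
  transitivity (G - s * ((Cexpi th + Cexpi (- th)) * G) + s * s * (Cexpi th * Cexpi (- th)) * G)%C. cring.
  rewrite H.
  transitivity (G' + (G - G') - s * ((Cexpi th + Cexpi (- th)) * G) + s * s * G)%C.
  cring. rewrite E. cring.
Qed.

Lemma GG_iter q th c d (s : C) N : 0 < q < 1 -> c <> RtoC 0 -> Cmod s < 1 ->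
  (GG q th c d s * qpoch (s * Cexpi th) q N * qpoch (s * Cexpi (- th)) q N =
   qpoch (s * c) q N * qpoch (s * d) q N * GG q th c d (RtoC (q ^ N) * s))%C.
Proof.
  intros Hq Hc Hs. induction N.
  - simpl qpoch. simpl (q ^ 0). toC. replace (RtoC 1 * s)%C with s by cring. cring.
  - rewrite !qpoch_S.
    assert (Hs' : Cmod (RtoC (q ^ N) * s)%C < 1).
    { rewrite Cmod_mult, Cmod_R, Rabs_pos_eq by (apply pow_le; lra).
      pose proof (pow_le1 q N ltac:(lra)). pose proof (Cmod_ge_0 s). nra. }
    pose proof (GG_FE q th c d (RtoC (q ^ N) * s)%C Hq Hc Hs') as FE.
    replace (RtoC q * (RtoC (q ^ N) * s))%C with (RtoC (q ^ S N) * s)%C in FE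
      by (rewrite RtoC_powS; cring).
    transitivity ((GG q th c d s * qpoch (s * Cexpi th) q N * qpoch (s * Cexpi (- th)) q N) *
       (1 - s * Cexpi th * RtoC (q ^ N)) * (1 - s * Cexpi (- th) * RtoC (q ^ N)))%C. cring.
    rewrite IHN.
    transitivity (qpoch (s * c) q N * qpoch (s * d) q N *
      (GG q th c d (RtoC (q ^ N) * s) * (1 - RtoC (q ^ N) * s * Cexpi th) * (1 - RtoC (q ^ N) * s * Cexpi (- th))))%C.
    cring. rewrite FE. cring.
Qed.

Lemma GF (q th : R) (c d : C) (s : C) : 0 < q < 1 -> c <> RtoC 0 -> Cmod s < 1 ->
  Cconv (Csum (fun k => gg q th c d k * s ^ k)%C)
    (qpoch_inf (s * c) q * qpoch_inf (s * d) q / (qpoch_inf (s * Cexpi th) q * qpoch_inf (s * Cexpi (- th)) q))%C.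
Proof.
  intros Hq Hc Hs.
  assert (He1 : qpoch_inf (s * Cexpi th)%C q <> RtoC 0).
  { apply qpoch_inf_nonzero; auto. rewrite Cmod_mult, Cmod_expi. lra. }
  assert (He2 : qpoch_inf (s * Cexpi (- th))%C q <> RtoC 0).
  { apply qpoch_inf_nonzero; auto. rewrite Cmod_mult, Cmod_expi. lra. }
  assert (E : (GG q th c d s * qpoch_inf (s * Cexpi th) q * qpoch_inf (s * Cexpi (- th)) q =
               qpoch_inf (s * c) q * qpoch_inf (s * d) q * 1)%C).
  { apply (Cconv_unique (fun N => GG q th c d s * qpoch (s * Cexpi th) q N * qpoch (s * Cexpi (- th)) q N)%C).
    - apply Cconv_mult. apply Cconv_mult. apply Cconv_const. apply qpoch_conv; auto. apply qpoch_conv; auto.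
    - apply (Cconv_ext (fun N => qpoch (s * c) q N * qpoch (s * d) q N * GG q th c d (RtoC (q ^ N) * s))%C).
      intros N. symmetry. apply GG_iter; auto.
      apply Cconv_mult. apply Cconv_mult; apply qpoch_conv; auto. apply GG_cont; auto. }
  apply (Cconv_ext (Csum (fun k => gg q th c d k * s ^ k)%C)). auto.
  replace (qpoch_inf (s * c) q * qpoch_inf (s * d) q / (qpoch_inf (s * Cexpi th) q * qpoch_inf (s * Cexpi (- th)) q))%C
    with (GG q th c d s).
  apply GG_conv; auto.
  set (G := GG q th c d s) in *. set (A := qpoch_inf (s * Cexpi th)%C q) in *. set (B := qpoch_inf (s * Cexpi (- th))%C q) in *.
  transitivity ((G * A * B) / (A * B))%C. apply Ceq_help. field. auto.
  rewrite E. apply Ceq_help. field. auto.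
Qed.
End Aux6.

Module Aux7.
Import Complex Aux Aux2 AuxT Aux3 Aux4 Aux5 Aux6.

Lemma rphis_fin n (al bl : list Cpx) q z : 0 < q ->
  (1 + Z.of_nat (length bl) - Z.of_nat (length (RtoC (/ q ^ n) :: al)))%Z = 0%Z ->
  rphis (RtoC (/ q ^ n) :: al) bl q z =
  Csum (fun j => qpoch_list (RtoC (/ q ^ n) :: al) q j / qpoch_list (RtoC q :: bl) q j * z ^ j)%C (S n).
Proof.
  intros Hq HZ. unfold rphis. toC. rewrite HZ. simpl powerRZ.
  rewrite (Cseries_finite _ (S n)).
  - apply Csum_ext. intros. rewrite Cpow_eq. cring.
  - intros i Hi. unfold qpoch_list at 1. simpl fold_right. rewrite qpoch_zero_gt by (auto; lia). cring.
Qed.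

Lemma Csum_swap (F : nat -> nat -> C) M N :
  Csum (fun k => Csum (fun j => F j k) M) N = Csum (fun j => Csum (fun k => F j k) N) M.
Proof.
  induction N; simpl. rewrite Csum_zero; auto.
  rewrite IHN, <- Csum_plus. reflexivity.
Qed.

Lemma Cconv_Csum (u : nat -> nat -> C) (l : nat -> C) M :
  (forall j, (j < M)%nat -> Cconv (u j) (l j)) -> Cconv (fun N => Csum (fun j => u j N) M) (Csum l M).
Proof.
  induction M; intros H; simpl. apply Cconv_const.
  apply Cconv_plus. apply IHM. intros; apply H; lia. apply H; lia.
Qed.

Lemma qpoch_nz_of x q j : 0 < q -> (forall m, x <> RtoC (/ q ^ m)) -> qpoch x q j <> RtoC 0.
Proof.
  intros Hq H. induction j. simpl. toC. intro E. apply RtoC_inj in E. lra.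
  rewrite qpoch_S. toC. apply Cmult_neq_0; auto. intro E. apply (H j).
  assert (RtoC (q ^ j) <> RtoC 0) by (intro E'; apply RtoC_inj in E'; apply (pow_nonzero q j); lra).
  rewrite RtoC_inv by (apply pow_nonzero; lra).
  transitivity ((1 - (1 - x * RtoC (q ^ j))) / RtoC (q ^ j))%C. apply Ceq_help. field. auto.
  rewrite E. apply Ceq_help. field. auto.
Qed.

Lemma qpoch_nz_small x q j : 0 < q < 1 -> Cmod x < 1 -> qpoch x q j <> RtoC 0.
Proof.
  intros Hq Hx. apply qpoch_nz_of. lra. intros m E. subst x.
  rewrite Cmod_R, Rabs_pos_eq in Hx by (left; apply Rinv_0_lt_compat, pow_lt; lra).
  pose proof (pow_le1 q m ltac:(lra)). pose proof (pow_lt q m ltac:(lra)).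
  assert (1 <= / q ^ m). { rewrite <- Rinv_1. apply Rinv_le_contravar; lra. } lra.
Qed.
End Aux7.

Module Aux8.
Import Complex Aux Aux2 AuxT Aux3 Aux4 Aux5 Aux6 Aux7.

Lemma Csum_scal_r (a : C) f n : (Csum f n * a)%C = Csum (fun i => f i * a)%C n.
Proof. rewrite Cmult_comm, <- Csum_scal. apply Csum_ext. intros. cring. Qed.

Lemma Cmod_sj (t : C) q j : 0 < q < 1 -> Cmod t < 1 -> Cmod (t * RtoC (q ^ j))%C < 1.
Proof.
  intros Hq Ht. rewrite Cmod_mult, Cmod_R, Rabs_pos_eq by (apply pow_le; lra).
  pose proof (pow_le1 q j ltac:(lra)). pose proof (Cmod_ge_0 t). pose proof (pow_le q j ltac:(lra)). nra.
Qed.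

Lemma main_aux (q : R) (a b c d t : C) (n : nat) (th : R) :
  0 < q < 1 ->
  (forall m : nat, (a * RtoC q)%C <> RtoC (/ q ^ m)) ->
  Cmod t < 1 ->
  (forall m : nat, (t * c)%C <> RtoC (/ q ^ m)) ->
  (forall m : nat, (t * d)%C <> RtoC (/ q ^ m)) ->
  c <> RtoC 0 ->
  Cconv
    (Csum (fun k =>
       (t ^ k / qpoch (RtoC q) q k) *
            (little_qjacobi n (RtoC (q ^ k)) a b q * al_salam_chihara k th c d q))%C)
    ((qpoch_inf (t * c)%C q * qpoch_inf (t * d)%C q /
        (qpoch_inf (t * Cexpi th)%C q * qpoch_inf (t * Cexpi (- th))%C q)) *
       rphis (RtoC (/ q ^ n) :: (a * b * RtoC (q ^ (S n)))%C
               :: (t * Cexpi th)%C :: (t * Cexpi (- th))%C :: nil)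
              ((a * RtoC q)%C :: (t * c)%C :: (t * d)%C :: nil)
              q (RtoC q))%C.
Proof.
  intros Hq Ha Ht Htc Htd Hc.
  set (A := fun j => (qpoch_list (RtoC (/ q ^ n) :: (a * b * RtoC (q ^ S n))%C :: nil) q j /
                     qpoch_list (RtoC q :: (a * RtoC q)%C :: nil) q j * RtoC (q ^ j))%C).
  set (s := fun j => (t * RtoC (q ^ j))%C).
  set (H := fun (x : C) => (qpoch_inf (x * c)%C q * qpoch_inf (x * d)%C q /
          (qpoch_inf (x * Cexpi th)%C q * qpoch_inf (x * Cexpi (- th))%C q))%C).
  apply (Cconv_ext (fun N => Csum (fun j => A j * Csum (fun k => gg q th c d k * s j ^ k)%C N)%C (S n))).
  - intros N.
    transitivity (Csum (fun j => Csum (fun k => A j * (gg q th c d k * s j ^ k))%C N) (S n)).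
    { apply Csum_ext. intros. rewrite Csum_scal. reflexivity. }
    rewrite Csum_swap. apply Csum_ext. intros k Hk.
    unfold little_qjacobi. rewrite rphis_fin by (lra || reflexivity).
    rewrite Csum_scal_r, <- Csum_scal. apply Csum_ext. intros j Hj.
    unfold A, s, gg. toC. rewrite !Cpow_mult_l. rewrite <- !RtoC_pow.
    replace ((q ^ j) ^ k) with ((q ^ k) ^ j) by (rewrite <- !pow_mult; f_equal; lia).
    pose proof (qpoch_q_nz q k Hq).
    assert (qpoch_list (RtoC q :: (a * RtoC q)%C :: nil) q j <> RtoC 0).
    { unfold qpoch_list. simpl fold_right. apply Cmult_neq_0. apply qpoch_q_nz; auto.
      apply Cmult_neq_0. apply qpoch_nz_of; auto; lra. intro E. apply RtoC_inj in E. lra. }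
    apply Ceq_help. field. auto.
  - replace (rphis _ _ q (RtoC q)) with
      (Csum (fun j => qpoch_list (RtoC (/ q ^ n) :: (a * b * RtoC (q ^ (S n)))%C
               :: (t * Cexpi th)%C :: (t * Cexpi (- th))%C :: nil) q j /
             qpoch_list (RtoC q :: (a * RtoC q)%C :: (t * c)%C :: (t * d)%C :: nil) q j * RtoC q ^ j)%C (S n))
      by (symmetry; apply rphis_fin; (lra || reflexivity)).
    match goal with |- Cconv _ (?PP * ?SS)%C => replace (PP * SS)%C with (Csum (fun j => A j * H (s j))%C (S n)) end.
    + apply Cconv_Csum. intros j Hj. apply Cconv_mult. apply Cconv_const.
      unfold H. apply GF; auto. apply Cmod_sj; auto.
    + rewrite <- Csum_scal. apply Csum_ext. intros j Hj. unfold A, H, s, qpoch_list. simpl fold_right.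
      rewrite (qpoch_inf_split (t * c)%C q j Hq), (qpoch_inf_split (t * d)%C q j Hq),
        (qpoch_inf_split (t * Cexpi th)%C q j Hq), (qpoch_inf_split (t * Cexpi (- th))%C q j Hq).
      replace (t * c * RtoC (q ^ j))%C with (t * RtoC (q ^ j) * c)%C by cring.
      replace (t * d * RtoC (q ^ j))%C with (t * RtoC (q ^ j) * d)%C by cring.
      replace (t * Cexpi th * RtoC (q ^ j))%C with (t * RtoC (q ^ j) * Cexpi th)%C by cring.
      replace (t * Cexpi (- th) * RtoC (q ^ j))%C with (t * RtoC (q ^ j) * Cexpi (- th))%C by cring.
      assert (Hsj : Cmod (t * RtoC (q ^ j))%C < 1) by (apply Cmod_sj; auto).
      pose proof (qpoch_inf_nonzero (t * RtoC (q ^ j) * Cexpi th)%C q Hq ltac:(rewrite Cmod_mult, Cmod_expi; lra)).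
      pose proof (qpoch_inf_nonzero (t * RtoC (q ^ j) * Cexpi (- th))%C q Hq ltac:(rewrite Cmod_mult, Cmod_expi; lra)).
      pose proof (qpoch_nz_small (t * Cexpi th)%C q j Hq ltac:(rewrite Cmod_mult, Cmod_expi; lra)).
      pose proof (qpoch_nz_small (t * Cexpi (- th))%C q j Hq ltac:(rewrite Cmod_mult, Cmod_expi; lra)).
      pose proof (qpoch_nz_of (t * c)%C q j ltac:(lra) Htc).
      pose proof (qpoch_nz_of (t * d)%C q j ltac:(lra) Htd).
      pose proof (qpoch_nz_of (a * RtoC q)%C q j ltac:(lra) Ha).
      pose proof (qpoch_q_nz q j Hq).
      rewrite <- RtoC_pow.
      toC. apply Ceq_help. field. repeat split; auto.
Qed.
End Aux8.

Theorem mainTheorem6 (q : R) (a b c d t : Cpx) (n : nat) (th : R) :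
  0 < q < 1 ->
  (forall m : nat, Cmul a (RtoC q) <> RtoC (/ q ^ m)) ->
  Cnorm t < 1 ->
  (forall m : nat, Cmul t c <> RtoC (/ q ^ m)) ->
  (forall m : nat, Cmul t d <> RtoC (/ q ^ m)) ->
  c <> C0 ->
  0 <= th <= PI ->
  Cconv
    (Csum (fun k =>
       Cmul (Cdiv (Cpow t k) (qpoch (RtoC q) q k))
            (Cmul (little_qjacobi n (RtoC (q ^ k)) a b q)
                  (al_salam_chihara k th c d q))))
    (Cmul
       (Cdiv (Cmul (qpoch_inf (Cmul t c) q) (qpoch_inf (Cmul t d) q))
             (Cmul (qpoch_inf (Cmul t (Cexpi th)) q)
                   (qpoch_inf (Cmul t (Cexpi (- th))) q)))
       (rphis (RtoC (/ q ^ n) :: Cmul (Cmul a b) (RtoC (q ^ (S n)))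
               :: Cmul t (Cexpi th) :: Cmul t (Cexpi (- th)) :: nil)
              (Cmul a (RtoC q) :: Cmul t c :: Cmul t d :: nil)
              q (RtoC q))).

Proof.
  intros Hq Ha Ht Htc Htd Hc Hth.
  pose proof (Aux8.main_aux q a b c d t n th Hq Ha Ht Htc Htd Hc) as H.
  eapply Aux.Cconv_ext; [|exact H]. intros N. apply Aux.Csum_ext. intros k _. rewrite Aux.Cpow_eq. reflexivity.
Qed.
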